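(* Let $h:\mathbb{R}^d\to\mathbb{R}^{d_\eta}$ be an encoder and let $g$ be a final linear-softmax classification layer for two classes $A,B$, with logits $\boldsymbol{\mathrm{w}}_A^{\top}\boldsymbol{z}+b_A$ and $\boldsymbol{\mathrm{w}}_B^{\top}\boldsymbol{z}+b_B$ on a latent vector $\boldsymbol{z}\in\mathbb{R}^{d_\eta}$. Set $\boldsymbol{\mathrm{w}}=\boldsymbol{\mathrm{w}}_A-\boldsymbol{\mathrm{w}}_B$ and $b=b_A-b_B$, so that the separating hyperplane between classes $A$ and $B$ is $\{\boldsymbol{z}:\boldsymbol{\mathrm{w}}^{\top}\boldsymbol{z}+b=0\}$, and $g(\boldsymbol{z})=A$ if $\boldsymbol{\mathrm{w}}^{\top}\boldsymbol{z}+b>0$ and $g(\boldsymbol{z})=B$ otherwise. Let $f=g\circ h$ be the resulting binary classifier, and let $p(A\mid\boldsymbol{x},f)=\dfrac{e^{\boldsymbol{\mathrm{w}}_A^{\top}\boldsymbol{z}+b_A}}{e^{\boldsymbol{\mathrm{w}}_A^{\top}\boldsymbol{z}+b_A}+e^{\boldsymbol{\mathrm{w}}_B^{\top}\boldsymbol{z}+b_B}}$ with $\boldsymbol{z}=h(\boldsymbol{x})$ denote the softmax probability of class $A$ output by $f$ at an input $\boldsymbol{x}\in\mathbb{R}^d$. Let $\mathcal{T}(\boldsymbol{x})\sim\tau$ be a randomized transformation of the input $\boldsymbol{x}$, suppose $f(\boldsymbol{x})=A$, and let $$p_A=\mathbb{P}_{\mathcal{T}(\boldsymbol{x})}\big(f(\mathcal{T}(\boldsymbol{x}))=A\big)$$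 be the probability of obtaining the original class under the transformation. Let $\epsilon_\eta=h(\mathcal{T}(\boldsymbol{x}))-h(\boldsymbol{x})$ be the induced perturbation of the latent representation, and let $\rho$ be the distribution of the real random variable $\boldsymbol{\mathrm{w}}^{\top}\epsilon_\eta$, with cumulative distribution function $F$. Assume that the inverse $F^{-1}$ of $F$ exists and that $\rho$ has mean zero. Then $$p(A\mid\boldsymbol{x},f)=\frac{1}{1+e^{F^{-1}(1-p_A)}}.$$
   Context: Here $\boldsymbol{x}$ is an input image, $f$ a neural network used for binary classification decomposed as $f=g\circ h$ with $h$ the encoder (all layers up to the final classification layer) and $g$ the final classification layer. The random transformation $\mathcal{T}$ is arbitrary (e.g. additive noise, rotations, elastic deformations); the only randomness is in $\mathcal{T}(\boldsymbol{x})$. *)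

(* Defs.v *)
From HB Require Import structures.
From mathcomp Require Import all_boot all_order all_algebra.
From mathcomp Require Import all_classical all_reals all_analysis.
Set Implicit Arguments. Unset Strict Implicit. Unset Printing Implicit Defensive.
Import Order.TTheory GRing.Theory Num.Theory.
Local Open Scope ring_scope.
Local Open Scope classical_set_scope.

Inductive cls := ClassA | ClassB.

Definition dotv (R : ringType) (n : nat) (w z : 'rV[R]_n) : R := (w *m z^T) 0 0.

Definition gcls (R : realType) (n : nat) (wA wB : 'rV[R]_n) (bA bB : R)
  (z : 'rV[R]_n) : cls :=
  if 0 < dotv (wA - wB) z + (bA - bB) then ClassA else ClassB.

Definition softmaxA (R : realType) (n : nat) (wA wB : 'rV[R]_n) (bA bB : R)
  (z : 'rV[R]_n) : R :=
  expR (dotv wA z + bA) / (expR (dotv wA z + bA) + expR (dotv wB z + bB)).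

Definition cdfR d (T : measurableType d) (R : realType) (P : probability T R)
  (X : T -> R) (t : R) : R := fine (P (X @^-1` `]-oo, t])).

(* Main.v *)
Require Import Defs.
From HB Require Import structures.
From mathcomp Require Import all_boot all_order all_algebra.
From mathcomp Require Import all_classical all_reals all_analysis.
From mathcomp Require Import lra ring.
Import Order.TTheory GRing.Theory Num.Theory.
Local Open Scope ring_scope.
Local Open Scope classical_set_scope.

Lemma dotvB (R : realType) n (w a b : 'rV[R]_n) :
  dotv w (a - b) = dotv w a - dotv w b.
Proof. by rewrite /dotv linearB mulmxBr [LHS]mxE; congr (_ + _); rewrite mxE. Qed.

Lemma dotvBl (R : realType) n (w v a : 'rV[R]_n) :
  dotv (w - v) a = dotv w a - dotv v a.
Proof. by rewrite /dotv mulmxBl [LHS]mxE; congr (_ + _); rewrite mxE. Qed.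

Theorem proposition2
  (R : realType) (d de : nat)
  (h : 'rV[R]_d -> 'rV[R]_de)
  (wA wB : 'rV[R]_de) (bA bB : R)
  (x : 'rV[R]_d)
  (dT : measure_display) (Omega : measurableType dT) (P : probability Omega R)
  (Tx : Omega -> 'rV[R]_d)
  (Finv : R -> R) :
  let f := fun y => gcls wA wB bA bB (h y) in
  let X := fun om => dotv (wA - wB) (h (Tx om) - h x) in
  let F := cdfR P X in
  let pA := fine (P [set om | f (Tx om) = ClassA]) in
  measurable_fun setT X ->
  (forall t, Finv (F t) = t) ->
  P.-integrable setT (EFin \o X) ->
  ('E_P[X] = 0)%E ->
  f x = ClassA ->
  softmaxA wA wB bA bB (h x) = 1 / (1 + expR (Finv (1 - pA))).
Proof.
move=> f X F pA mX FK _ _ _.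
set c := dotv (wA - wB) (h x) + (bA - bB).
have mS : measurable (X @^-1` `]-oo, - c]).
  by rewrite -[X @^-1` _]setTI; apply: mX => //; exact: measurable_itv.
have setE : [set om | f (Tx om) = ClassA] = ~` (X @^-1` `]-oo, - c]).
  apply/seteqP; split => om /=; rewrite /f /gcls /X dotvB in_itv /= -/c;
  rewrite /c !dotvBl.
  - case: ifP => // H _; apply/negP; rewrite -ltNge; lra.
  - move=> Hn; case: ifP => // /negbT; rewrite -leNgt => H2; exfalso; apply: Hn; lra.
have hpA : 1 - pA = F (- c).
  rewrite /pA setE probability_setC // /F /cdfR.
  have : (P (X @^-1` `]-oo, - c]) \is a fin_num) by rewrite fin_num_measure.
  case: (P _) => //= r _; lra.
rewrite hpA FK /softmaxA expRN.
rewrite /c !dotvBl.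
set a := dotv wA (h x) + bA; set b := dotv wB (h x) + bB.
have -> : dotv wA (h x) - dotv wB (h x) + (bA - bB) = a - b.
  by rewrite /a /b opprD addrACA addrA.
rewrite expRB.
have ha : 0 < expR a by exact: expR_gt0.
have hb : 0 < expR b by exact: expR_gt0.
have hab : 0 < expR a + expR b by exact: addr_gt0.
rewrite invf_div.
have -> : 1 + expR b / expR a = (expR a + expR b) / expR a.
  by field; rewrite gt_eqF.
rewrite div1r invf_div.
by rewrite mulrC.
Qed.
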